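(* Let $n\geqslant 2$, let $C=\{x,y,e_1,\ldots,e_n\}$ and let $U$ be the set of monoid relations on $C$: (U1) $e_i^2=e_i$ for $1\leqslant i\leqslant n$; (U2) $xy=e_n$ and $yx=e_1$; (U3) $xe_1=x$ and $e_1y=y$; (U4) $e_ie_j=e_je_i$ for $1\leqslant i<j\leqslant n$; (U5) $xe_{i+1}=e_ix$ for $1\leqslant i\leqslant n-1$; (U6) $xe_2\cdots e_n=e_1e_2\cdots e_n$. Then $\langle C\mid U\rangle$ is a monoid presentation of $\mathcal{OCI}_n$ (with respect to the map sending each letter to the transformation of the same name). It has $n+2$ generators and $\frac12(n^2+3n+8)$ relations.
   Context: Let $\Omega_n=\{1<\cdots<n\}$, $\mathcal{I}_n$ the symmetric inverse monoid on $\Omega_n$ (maps on the right, composed left to right). $g$ is the permutation $ig=i+1$ ($1\leqslant i\leqslant n-1$), $ng=1$; $\mathcal{C}_n=\{1,g,\ldots,g^{n-1}\}$; $\mathcal{CI}_n=\{\alpha\in\mathcal{I}_n\mid \alpha=\sigma|_{\mathrm{Dom}(\alpha)}\text{ for some }\sigma\in\mathcal{C}_n\}$; $\mathcal{OCI}_n$ is the submonoid of order-preserving elements of $\mathcal{CI}_n$. $e_i$ is the partial identity on $\Omega_n\setminus\{i\}$; $x$ has domain $\{1,\ldots,n-1\}$ with $ix=i+1$; $y=x^{-1}$ has domain $\{2,\ldots,n\}$ with $iy=i-1$. A presentation $\langle C\mid U\rangle$ defines $M$ via an injective map $C\to M$ whose image generates $M$ if the kernel of the induced homomorphism $C^*\to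 M$ is the smallest congruence on $C^*$ containing $U$. *)

(* Defs.v *)
From HB Require Import structures.
From mathcomp Require Import all_boot.
Set Implicit Arguments. Unset Strict Implicit. Unset Printing Implicit Defensive.

(* Convention: Omega_n = {1 < ... < n} is modelled by 'I_n = {0 < ... < n-1},
   the point i of the paper being the ordinal i-1. *)

(* Partial transformations of Omega_n: f i = None means i \notin Dom f. *)
Definition pmap (n : nat) := {ffun 'I_n -> option 'I_n}.

(* Composition, maps on the right, left to right: i (a b) = (i a) b. *)
Definition pcomp n (a b : pmap n) : pmap n := [ffun i => obind b (a i)].
Definition pid n : pmap n := [ffun i => Some i].

Definition in_dom n (a : pmap n) (i : 'I_n) : bool := a i != None.

Definition is_pinj n (a : pmap n) : bool :=
  [forall i, forall j, (in_dom a i && (a i == a j)) ==> (i == j)].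

Definition gcyc n (i : 'I_n) : 'I_n := ordS i.

Definition in_Cn n (s : 'I_n -> 'I_n) : Prop :=
  exists2 k, k < n & forall i, s i = iter k (@gcyc n) i.

Definition in_CI n (a : pmap n) : Prop :=
  is_pinj a /\ exists s, in_Cn s /\ forall i, in_dom a i -> a i = Some (s i).

Definition order_preserving n (a : pmap n) : Prop :=
  forall i j (ai aj : 'I_n), a i = Some ai -> a j = Some aj ->
    i <= j -> ai <= aj.

Definition in_OCI n (a : pmap n) : Prop := in_CI a /\ order_preserving a.

(* e_i (paper index i+1): partial identity on Omega_n \ {i}. *)
Definition pe n (i : 'I_n) : pmap n := [ffun j => if j == i then None else Some j].
Definition px n : pmap n := [ffun j : 'I_n => if j.+1 < n then Some (ordS j) else None].
Definition py n : pmap n := [ffun j : 'I_n => if 0 < j then Some (ord_pred j) else None].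

Inductive letter (n : nat) := LX | LY | LE of 'I_n.
Arguments LX {n}. Arguments LY {n}.

Definition letter_enc n (c : letter n) : option (option 'I_n) :=
  match c with LX => None | LY => Some None | LE i => Some (Some i) end.
Definition letter_dec n (o : option (option 'I_n)) : letter n :=
  match o with None => LX | Some None => LY | Some (Some i) => LE i end.
Lemma letter_encK n : cancel (@letter_enc n) (@letter_dec n).
Proof. by case. Qed.
HB.instance Definition _ n := Finite.copy (letter n) (can_type (@letter_encK n)).

Definition gen n (c : letter n) : pmap n :=
  match c with LX => px n | LY => py n | LE i => pe i end.

Definition evalw n (f : letter n -> pmap n) (w : seq (letter n)) : pmap n :=
  foldr (fun c acc => pcomp (f c) acc) (pid n) w.

Inductive cgr (A : eqType) (U : seq (seq A * seq A)) : seq A -> seq A -> Prop :=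
| cgr_rel u v : (u, v) \in U -> cgr U u v
| cgr_refl u : cgr U u u
| cgr_sym u v : cgr U u v -> cgr U v u
| cgr_trans u v w : cgr U u v -> cgr U v w -> cgr U u w
| cgr_mul u v u' v' : cgr U u v -> cgr U u' v' -> cgr U (u ++ u') (v ++ v').

Definition is_presentation n (M : pmap n -> Prop) (f : letter n -> pmap n)
    (U : seq (seq (letter n) * seq (letter n))) : Prop :=
  [/\ forall c, M (f c),
      injective f,
      forall a, M a -> exists w, evalw f w = a &
      forall u v, evalw f u = evalw f v <-> cgr U u v].

(* The relations U (paper indices i+1 for ordinal i). *)
Definition es_tail n : seq (letter n) := [seq LE j | j <- enum 'I_n & 0 < val j].

Definition U1 n : seq (seq (letter n) * seq (letter n)) := [seq ([:: LE i; LE i], [:: LE i]) | i : 'I_n <- enum 'I_n].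
Definition U2 n : seq (seq (letter n) * seq (letter n)) :=
  [seq ([:: LX; LY], [:: LE i]) | i : 'I_n <- enum 'I_n & val i == n.-1] ++
  [seq ([:: LY; LX], [:: LE i]) | i : 'I_n <- enum 'I_n & val i == 0].
Definition U3 n : seq (seq (letter n) * seq (letter n)) :=
  [seq ([:: LX; LE i], [:: LX]) | i : 'I_n <- enum 'I_n & val i == 0] ++
  [seq ([:: LE i; LY], [:: LY]) | i : 'I_n <- enum 'I_n & val i == 0].
Definition U4 n : seq (seq (letter n) * seq (letter n)) :=
  [seq ([:: LE i; LE j], [:: LE j; LE i]) | i : 'I_n <- enum 'I_n, j : 'I_n <- [seq j : 'I_n <- enum 'I_n | i < j]].
Definition U5 n : seq (seq (letter n) * seq (letter n)) :=
  [seq ([:: LX; LE j], [:: LE i; LX]) | i : 'I_n <- enum 'I_n, j : 'I_n <- [seq j : 'I_n <- enum 'I_n | val j == (val i).+1]].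
Definition U6 n : seq (seq (letter n) * seq (letter n)) :=
  [seq (LX :: es_tail n, LE i :: es_tail n) | i : 'I_n <- enum 'I_n & val i == 0].

Definition rels n : seq (seq (letter n) * seq (letter n)) := U1 n ++ U2 n ++ U3 n ++ U4 n ++ U5 n ++ U6 n.

(* Main.v *)
Require Import Defs.
From mathcomp Require Import all_boot.
From mathcomp Require Import zify.
From Stdlib Require Import Setoid Morphisms.
Set Implicit Arguments. Unset Strict Implicit. Unset Printing Implicit Defensive.
Local Notation pmap := Defs.pmap.
Local Notation pcomp := Defs.pcomp.

Section S0.
Variables (A : eqType) (U : seq (seq A * seq A)).
Lemma cgr_refl' : Reflexive (cgr U). Proof. by move=> x; apply: cgr_refl. Qed.
Lemma cgr_sym' : Symmetric (cgr U). Proof. by move=> x y; apply: cgr_sym. Qed.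
Lemma cgr_trans' : Transitive (cgr U). Proof. by move=> x y z; apply: cgr_trans. Qed.
End S0.
Add Parametric Relation (A : eqType) (U : seq (seq A * seq A)) : (seq A) (cgr U)
  reflexivity proved by (@cgr_refl' A U) symmetry proved by (@cgr_sym' A U)
  transitivity proved by (@cgr_trans' A U) as cgr_setoid.
Add Parametric Morphism (A : eqType) (U : seq (seq A * seq A)) : (@cat A)
  with signature (cgr U) ==> (cgr U) ==> (cgr U) as cat_mor.
Proof. by move=> x y H x' y' H'; apply: cgr_mul. Qed.
Add Parametric Morphism (A : eqType) (U : seq (seq A * seq A)) : (@cons A)
  with signature eq ==> (cgr U) ==> (cgr U) as cons_mor.
Proof. by move=> a x y H; apply: (@cgr_mul _ _ [:: a] [:: a]) => //; apply: cgr_refl. Qed.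

Lemma inL (T : eqType) (x : T) s1 s2 : x \in s1 -> x \in s1 ++ s2.
Proof. by rewrite mem_cat => ->. Qed.
Lemma inR (T : eqType) (x : T) s1 s2 : x \in s2 -> x \in s1 ++ s2.
Proof. by rewrite mem_cat orbC => ->. Qed.

Lemma inCat (T : eqType) (x : T) s1 s2 : x \in s1 ++ s2 -> x \in s1 \/ x \in s2.
Proof. by rewrite mem_cat => /orP. Qed.

#[global] Hint Extern 0 (cgr _ _ _) => apply: cgr_refl : core.

Section Main.
Variable m : nat.
Local Notation n := m.+2.
Local Notation c := (cgr (rels n)).
Local Notation eL k := (LE (inord k : 'I_n)).
Local Notation X := (@LX n).
Local Notation Y := (@LY n).

Local Notation P := (seq (letter n) * seq (letter n))%type.
Local Notation mc := (@mem_cat P).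
Lemma rel_ctx u v w : (u, v) \in rels n -> c (u ++ w) (v ++ w).
Proof. by move=> H; apply: cgr_mul; [apply: cgr_rel|apply: cgr_refl]. Qed.

Lemma r_idem (i : 'I_n) w : c [:: LE i, LE i & w] (LE i :: w).
Proof.
apply: (@rel_ctx [:: LE i; LE i] [:: LE i]); apply: inL.
by apply: (@map_f _ P (fun i : 'I_n => ([:: LE i; LE i], [:: LE i]))); rewrite mem_enum.
Qed.

Lemma r_xy (i : 'I_n) w : val i = n.-1 -> c [:: X, Y & w] (LE i :: w).
Proof.
move=> hi; apply: (@rel_ctx [:: X; Y] [:: LE i]); apply: inR; apply: inL; apply: inL.
apply: (@map_f _ P (fun i : 'I_n => ([:: X; Y], [:: LE i]))).
by rewrite mem_filter mem_enum hi eqxx.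
Qed.

Lemma r_yx (i : 'I_n) w : val i = 0 -> c [:: Y, X & w] (LE i :: w).
Proof.
move=> hi; apply: (@rel_ctx [:: Y; X] [:: LE i]); apply: inR; apply: inL; apply: inR.
apply: (@map_f _ P (fun i : 'I_n => ([:: Y; X], [:: LE i]))).
by rewrite mem_filter mem_enum hi eqxx.
Qed.

Lemma r_xe0 (i : 'I_n) w : val i = 0 -> c [:: X, LE i & w] (X :: w).
Proof.
move=> hi; apply: (@rel_ctx [:: X; LE i] [:: X]); apply: inR; apply: inR; apply: inL; apply: inL.
apply: (@map_f _ P (fun i : 'I_n => ([:: X; LE i], [:: X]))).
by rewrite mem_filter mem_enum hi eqxx.
Qed.

Lemma r_e0y (i : 'I_n) w : val i = 0 -> c [:: LE i, Y & w] (Y :: w).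
Proof.
move=> hi; apply: (@rel_ctx [:: LE i; Y] [:: Y]); apply: inR; apply: inR; apply: inL; apply: inR.
apply: (@map_f _ P (fun i : 'I_n => ([:: LE i; Y], [:: Y]))).
by rewrite mem_filter mem_enum hi eqxx.
Qed.

Lemma r_comm (i j : 'I_n) w : i < j -> c [:: LE i, LE j & w] [:: LE j, LE i & w].
Proof.
move=> hij; apply: (@rel_ctx [:: LE i; LE j] [:: LE j; LE i]); do 3 apply: inR; apply: inL.
apply: (@allpairs_f_dep _ _ P (fun i j : 'I_n => ([:: LE i; LE j], [:: LE j; LE i]))).
  by rewrite mem_enum.
by rewrite mem_filter mem_enum hij.
Qed.

Lemma r_xe (i j : 'I_n) w : val j = (val i).+1 -> c [:: X, LE j & w] [:: LE i, X & w].
Proof.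
move=> hij; apply: (@rel_ctx [:: X; LE j] [:: LE i; X]); do 4 apply: inR; apply: inL.
apply: (@allpairs_f_dep _ _ P (fun i j : 'I_n => ([:: X; LE j], [:: LE i; X]))).
  by rewrite mem_enum.
by rewrite mem_filter mem_enum hij eqxx.
Qed.

Lemma r_U6 (i : 'I_n) w : val i = 0 -> c (X :: es_tail n ++ w) (LE i :: es_tail n ++ w).
Proof.
move=> hi; apply: (@rel_ctx (X :: es_tail n) (LE i :: es_tail n)); do 5 apply: inR.
apply: (@map_f _ P (fun i : 'I_n => (X :: es_tail n, LE i :: es_tail n))).
by rewrite mem_filter mem_enum hi eqxx.
Qed.


Lemma ccons a u v : c u v -> c (a :: u) (a :: v).
Proof. by move=> h; rewrite h. Qed.

Lemma idem_n a w : c [:: eL a, eL a & w] (eL a :: w).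
Proof. exact: r_idem. Qed.

Lemma comm_n a b w : a < n -> b < n -> a != b ->
  c [:: eL a, eL b & w] [:: eL b, eL a & w].
Proof.
move=> ha hb; case: (ltngtP a b) => // hab _.
  by apply: r_comm; rewrite !inordK.
by symmetry; apply: r_comm; rewrite !inordK.
Qed.

Lemma xy_n w : c [:: X, Y & w] (eL m.+1 :: w).
Proof. by apply: r_xy; rewrite /= inordK. Qed.
Lemma yx_n w : c [:: Y, X & w] (eL 0 :: w).
Proof. by apply: r_yx; rewrite /= inordK. Qed.
Lemma xe0_n w : c [:: X, eL 0 & w] (X :: w).
Proof. by apply: r_xe0; rewrite /= inordK. Qed.
Lemma e0y_n w : c [:: eL 0, Y & w] (Y :: w).
Proof. by apply: r_e0y; rewrite /= inordK. Qed.
Lemma xe_n k w : k < m.+1 -> c [:: X, eL k.+1 & w] [:: eL k, X & w].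
Proof. by move=> hk; apply: r_xe; rewrite /= !inordK //; apply: (leq_trans hk). Qed.

Lemma enx w : c [:: eL m.+1, X & w] (X :: w).
Proof. by rewrite -(xy_n (X :: w)) yx_n xe0_n. Qed.

Lemma yen w : c [:: Y, eL m.+1 & w] (Y :: w).
Proof. by rewrite -(xy_n w) yx_n e0y_n. Qed.

Lemma ye k w : k < m.+1 -> c [:: Y, eL k & w] [:: eL k.+1, Y & w].
Proof.
move=> hk.
transitivity [:: Y, eL m.+1, eL k & w]; first by rewrite yen.
transitivity [:: Y, eL k, eL m.+1 & w].
  by apply: cons_mor => //; apply: comm_n => //; [apply: ltnW| rewrite neq_ltn hk orbT].
transitivity [:: Y, eL k, X, Y & w]; first by rewrite xy_n.
transitivity [:: Y, X, eL k.+1, Y & w]; first by rewrite xe_n.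
transitivity [:: eL 0, eL k.+1, Y & w]; first by rewrite yx_n.
transitivity [:: eL k.+1, eL 0, Y & w]; first by apply: comm_n.
by rewrite e0y_n.
Qed.


Definition ew (s : seq nat) : seq (letter n) := [seq eL k | k <- s].
Lemma ew_cons a s : ew (a :: s) = eL a :: ew s.
Proof. by []. Qed.
Lemma ew_cat s t : ew (s ++ t) = ew s ++ ew t.
Proof. exact: map_cat. Qed.

Definition cs (s : seq nat) := [seq k <- iota 0 n | k \in s].

Lemma cs_eq s L : sorted ltn L -> all (fun k => k < n) L -> all (fun k => k < n) s ->
  L =i s -> L = cs s.
Proof.
move=> sL aL aS eL'; apply: (irr_sorted_eq ltn_trans ltnn) => //.
  exact: (sorted_filter ltn_trans _ (iota_ltn_sorted 0 n)).
move=> k; rewrite mem_filter mem_iota add0n eL'.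
case kS: (k \in s) => //=; symmetry; exact: (allP aS).
Qed.

Lemma ins a L : a < n -> sorted ltn L -> all (fun k => k < n) L ->
  exists L', [/\ sorted ltn L', all (fun k => k < n) L', L' =i a :: L &
                 c (eL a :: ew L) (ew L')].
Proof.
elim: L => [|b L IH] ha.
  by move=> _ _; exists [:: a]; split => //=; rewrite ha.
move=> srt /= /andP[hb hL]; case: (ltngtP a b) => hab.
- exists [:: a, b & L]; split => //=; first by rewrite hab.
  by rewrite ha hb hL.
- have srtL := path_sorted srt.
  have [L' [s' a' mem' cc]] := IH ha srtL hL.
  exists (b :: L'); split => /=.
  + rewrite path_sortedE; last exact: ltn_trans.
    rewrite s' andbT; apply/allP => x; rewrite mem' inE => /orP[/eqP->//|xL].
    by move: srt => /=; rewrite path_sortedE; [case/andP=> /allP/(_ x xL) |exact: ltn_trans].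
  + by rewrite hb a'.
  + by move=> x; rewrite !inE mem' !inE; case: (x == a); case: (x == b).
  + transitivity [:: eL b, eL a & ew L].
      by apply: comm_n => //; rewrite neq_ltn hab orbT.
    by apply: cons_mor.
- subst b; exists (a :: L); split => //=; first by rewrite ha hL.
  + by move=> x; rewrite !inE orbA orbb.
  + exact: idem_n.
Qed.

Lemma all_cs s : all (fun k => k < n) (cs s).
Proof. by apply/allP => k; rewrite mem_filter mem_iota add0n => /andP[_ /andP[]]. Qed.

Lemma to_cs s : all (fun k => k < n) s -> c (ew s) (ew (cs s)).
Proof.
elim: s => [|a s IH] /=.
  by move=> _; rewrite -(@cs_eq [::] [::]).
move=> /andP[ha hs].
have [L' [s' a' mem' cc]] := ins ha (sorted_filter ltn_trans _ (iota_ltn_sorted 0 n)) (all_cs s).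
transitivity (eL a :: ew (cs s)); first by rewrite (IH hs).
rewrite -(@cs_eq (a :: s) L') //=; first by rewrite ha hs.
move=> x; rewrite mem' !inE mem_filter mem_iota add0n; case: eqP => [->|]//=;
  case xs: (x \in s) => //=; by rewrite (allP hs x xs).
Qed.

Lemma eperm s t : all (fun k => k < n) s -> all (fun k => k < n) t -> s =i t ->
  c (ew s) (ew t).
Proof.
move=> hs ht hst; rewrite (to_cs hs) (to_cs ht).
by have -> : cs s = cs t by apply: eq_filter => k; rewrite hst.
Qed.

Definition shd (s : seq nat) : seq nat := [seq k.-1 | k <- s & 0 < k].
Definition sup (s : seq nat) : seq nat := [seq k.+1 | k <- s & k < m.+1].

Lemma all_shd s : all (fun k => k < n) s -> all (fun k => k < n) (shd s).
Proof.
elim: s => [|b s IH] //= /andP[hb hs]; case: b hb => [|a] hb /=; first exact: IH.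
rewrite IH // andbT; lia.
Qed.

Lemma mem_shd s j : (j \in shd s) = (j.+1 \in s).
Proof. elim: s => [|b s IH] //=; case: b => [|a] /=; rewrite !inE IH //. Qed.

Lemma all_sup s : all (fun k => k < n) (sup s).
Proof. elim: s => [|a s IH] //=; rewrite /sup /= -/(sup s); case: ifP => [ha|_] /=; [by rewrite IH ltnS ha | exact: IH]. Qed.

Lemma mem_sup s j : (j \in sup s) = [&& 0 < j, j < n & j.-1 \in s].
Proof.
elim: s => [|a s IH]; first by rewrite /= !andbF.
rewrite /sup /= -/(sup s); case: ifP => ha; rewrite ?inE IH; clear IH.
  case: j => [|j] //=; rewrite eqSS; case: (eqVneq j a) => [->|hja] /=; last by [].
  by rewrite andbT ltnS ha.
case: j => [|j] //=; case: (eqVneq j a) => [->|hja] /=; last by [].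
by rewrite ltnS ha.
Qed.

Lemma pushX s w : all (fun k => k < n) s -> c (X :: ew s ++ w) (ew (shd s) ++ X :: w).
Proof.
elim: s => [|a s IH] //= /andP[ha hs].
case: a ha => [|a] ha /=; first by rewrite xe0_n; exact: (IH hs).
by rewrite xe_n //; rewrite (IH hs).
Qed.

Lemma pushY s w : all (fun k => k < n) s -> c (Y :: ew s ++ w) (ew (sup s) ++ Y :: w).
Proof.
elim: s => [|a s IH] //= /andP[ha hs].
rewrite /sup /= -/(sup s); case: ifP => hab /=; first by rewrite ye //; rewrite (IH hs).
have -> : a = m.+1 by lia.
by rewrite yen; apply: IH.
Qed.

Lemma AX k j w : j < n -> n <= j + k -> c (eL j :: nseq k X ++ w) (nseq k X ++ w).
Proof.
elim: k j => [|k IH] j hj hjk; first by lia.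
rewrite /=; case: (ltngtP j m.+1) => hj'; last 2 first.
- by lia.
- by subst j; rewrite enx.
rewrite -(xe_n _ hj'); rewrite IH //; lia.
Qed.

Lemma AY k j w : j < k -> j < n -> c (eL j :: nseq k Y ++ w) (nseq k Y ++ w).
Proof.
elim: k j => [|k IH] j hjk hj; first by lia.
rewrite /=; case: j hjk hj => [|j] hjk hj; first by rewrite e0y_n.
have hj' : j < m.+1 by lia.
rewrite -(ye _ hj'); rewrite IH //; lia.
Qed.

Lemma all_iter_shd k s : all (fun k => k < n) s -> all (fun k => k < n) (iter k shd s).
Proof. by elim: k => [|k IH] //= hs; apply: all_shd; apply: IH. Qed.

Lemma mem_iter_shd k s j : (j \in iter k shd s) = (j + k \in s).
Proof. by elim: k j => [|k IH] j /=; rewrite ?addn0 // mem_shd IH addSnnS. Qed.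

Lemma all_iter_sup k s : all (fun k => k < n) s -> all (fun k => k < n) (iter k sup s).
Proof. by case: k => [|k] //= hs; apply: all_sup. Qed.

Lemma mem_iter_sup k s j : all (fun k => k < n) s ->
  (j \in iter k sup s) = [&& k <= j, j < n & j - k \in s].
Proof.
move=> hs; elim: k j => [|k IH] j /=.
  by rewrite subn0; case js: (j \in s) => //=; rewrite ?andbF // (allP hs j js).
rewrite mem_sup IH; case: j => [|j] //=.
rewrite subSS ltnS; case: (leqP k j) => hk /=; last first.
  by rewrite andbF; symmetry; apply/and3P => [[h1 _ _]]; lia.
case: (ltnP j m.+1) => hj /=; last by rewrite andbF.
have hjn : j < n by apply: ltnW. by rewrite hjn ltnS hk.
Qed.

Lemma PX k s w : all (fun k => k < n) s ->
  c (nseq k X ++ ew s ++ w) (ew (iter k shd s) ++ nseq k X ++ w).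
Proof.
move=> hs; elim: k => [|k IH] //=.
rewrite IH; exact: pushX (all_iter_shd k hs).
Qed.

Lemma PY k s w : all (fun k => k < n) s ->
  c (nseq k Y ++ ew s ++ w) (ew (iter k sup s) ++ nseq k Y ++ w).
Proof.
move=> hs; elim: k => [|k IH] //=.
rewrite IH; exact: pushY (all_iter_sup k hs).
Qed.


Definition Zs := iota 0 n.
Lemma all_Zs : all (fun k => k < n) Zs.
Proof. by apply/allP => k; rewrite mem_iota. Qed.

Definition Ts := [seq k <- iota 0 n | 0 < k].
Lemma all_Ts : all (fun k => k < n) Ts.
Proof. by apply/allP => k; rewrite mem_filter mem_iota => /andP[]. Qed.

Lemma es_tail_ew : es_tail n = ew Ts.
Proof.
rewrite /es_tail /ew /Ts -val_enum_ord filter_map -map_comp.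
by apply: eq_map => j /=; rewrite inord_val.
Qed.

Lemma inord0 : (inord 0 : 'I_n) = ord0.
Proof. by apply: val_inj; rewrite /= inordK. Qed.

Lemma xT : c (X :: ew Ts) (ew Zs).
Proof.
have := @r_U6 ord0 [::] erefl; rewrite !cats0 es_tail_ew -inord0 => ->.
apply: (eperm (s := 0 :: Ts)); [by apply/andP; split; [|exact: all_Ts] | exact: all_Zs|].
by move=> k; rewrite /Zs mem_iota /Ts in_cons mem_filter mem_iota; case: k.
Qed.

Lemma xZ : c (X :: ew Zs) (ew Zs).
Proof.
transitivity (X :: ew (0 :: Ts)).
  apply: ccons; apply: (eperm (t := 0 :: Ts)); [exact: all_Zs|by apply/andP; split; [|exact: all_Ts]|].
  by move=> k; rewrite /Zs mem_iota /Ts in_cons mem_filter mem_iota; case: k.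
by rewrite ew_cons xe0_n xT.
Qed.

Lemma Zsplit : ew Zs = ew (iota 0 m.+1) ++ [:: eL m.+1].
Proof. by rewrite /Zs -[n in iota 0 n]addn1 iotaD ew_cat. Qed.

Lemma WX : c (ew (iota 0 m.+1) ++ [:: X]) (ew Zs).
Proof.
have h1 : all (fun k => k < n) (iota 1 m.+1) by apply/allP => k; rewrite mem_iota; lia.
have := pushX [::] h1; rewrite cats0 => h.
transitivity (ew (shd (iota 1 m.+1)) ++ [:: X]).
  apply: cat_mor => //; apply: eperm.
  - by apply/allP => k; rewrite mem_iota; lia.
  - exact: all_shd.
  - by move=> k; rewrite mem_shd !mem_iota; lia.
rewrite -h -xT; apply: ccons; apply: eperm => //; first exact: all_Ts.
by move=> k; rewrite mem_filter !mem_iota; lia.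
Qed.

Lemma Zy : c (ew Zs ++ [:: Y]) (ew Zs).
Proof.
symmetry; rewrite {1}Zsplit.
transitivity (ew (iota 0 m.+1) ++ [:: X; Y]); first by apply: cat_mor => //; rewrite xy_n.
by rewrite -[[:: X; Y]]/([:: X] ++ [:: Y]) catA WX.
Qed.

Lemma yZ : c (Y :: ew Zs) (ew Zs).
Proof.
have := pushY [::] all_Zs; rewrite cats0 => ->.
transitivity (ew (sup Zs) ++ [:: eL 0; Y]); first by apply: cat_mor => //; rewrite e0y_n.
rewrite -[_ ++ [:: eL 0; Y]]/(ew (sup Zs) ++ ew [:: 0] ++ [:: Y]) catA -ew_cat.
rewrite -Zy; apply: cat_mor => //; apply: eperm.
- by rewrite all_cat all_sup.
- exact: all_Zs.
- move=> k; rewrite mem_cat mem_sup mem_seq1 /Zs !mem_iota.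
  by case: k => [|k] //=; apply/idP/idP; lia.
Qed.

Lemma xkZ k : c (nseq k X ++ ew Zs) (ew Zs).
Proof. by elim: k => [|k IH] //=; rewrite IH xZ. Qed.

Lemma ykZ k : c (nseq k Y ++ ew Zs) (ew Zs).
Proof. by elim: k => [|k IH] //=; rewrite IH yZ. Qed.

Lemma CX s k w : all (fun k => k < n) s ->
  c (ew s ++ nseq k X ++ w) (ew [seq j <- s | j + k < n] ++ nseq k X ++ w).
Proof.
elim: s => [|a s IH] //= /andP[ha hs]; case: ifP => hak /=.
  by rewrite (IH hs).
transitivity (ew (s ++ [:: a]) ++ nseq k X ++ w).
  apply: (@cat_mor _ _ (ew (a :: s))) => //; apply: (@eperm (a :: s)); rewrite /= ?all_cat /= ?ha ?hs //.
  by move=> x; rewrite mem_cat !inE orbC.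
rewrite ew_cat -catA /= AX //; last by lia.
exact: IH.
Qed.

Lemma CY s k w : all (fun k => k < n) s ->
  c (ew s ++ nseq k Y ++ w) (ew [seq j <- s | k <= j] ++ nseq k Y ++ w).
Proof.
elim: s => [|a s IH] //= /andP[ha hs]; case: ifP => hak /=.
  by rewrite (IH hs).
transitivity (ew (s ++ [:: a]) ++ nseq k Y ++ w).
  apply: (@cat_mor _ _ (ew (a :: s))) => //; apply: (@eperm (a :: s)); rewrite /= ?all_cat /= ?ha ?hs //.
  by move=> x; rewrite mem_cat !inE orbC.
rewrite ew_cat -catA /= AY //; last by lia.
exact: IH.
Qed.

Lemma EmptyX s k : all (fun k => k < n) s -> (forall j, j + k < n -> j \in s) ->
  c (ew s ++ nseq k X) (ew Zs).
Proof.
move=> hs hj; have := CX k [::] hs; rewrite !cats0 => ->.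
have := PX k [::] all_Zs; rewrite !cats0 => h.
rewrite -(xkZ k) h; apply: cat_mor => //; apply: eperm.
- by apply/allP => x; rewrite mem_filter => /andP[_]; apply: (allP hs).
- exact: all_iter_shd all_Zs.
- move=> x; rewrite mem_filter mem_iter_shd mem_iota add0n.
  by case: ltnP => // h'; rewrite hj.
Qed.

Lemma EmptyY s k : all (fun k => k < n) s -> (forall j, k <= j -> j < n -> j \in s) ->
  c (ew s ++ nseq k Y) (ew Zs).
Proof.
move=> hs hj; have := CY k [::] hs; rewrite !cats0 => ->.
have := PY k [::] all_Zs; rewrite !cats0 => h.
rewrite -(ykZ k) h; apply: cat_mor => //; apply: eperm.
- by apply/allP => x; rewrite mem_filter => /andP[_]; apply: (allP hs).
- exact: all_iter_sup all_Zs.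
- move=> x; rewrite mem_filter (mem_iter_sup _ _ all_Zs) mem_iota add0n.
  case: (leqP k x) => hk //=; case xs: (x \in s).
    have hx := allP hs x xs; rewrite /= in hx.
    have -> : x - k < n by lia.
    by rewrite hx.
  case: (ltnP x n) => hx /=; last by [].
  by rewrite hj in xs.
Qed.


Local Notation E := (evalw (@gen n)).

Lemma pcompE (a b : pmap n) i : pcomp a b i = obind b (a i).
Proof. by rewrite /pcomp ffunE. Qed.

Lemma pcompA (a b d : pmap n) : pcomp (pcomp a b) d = pcomp a (pcomp b d).
Proof. by apply/ffunP => i; rewrite !pcompE; case: (a i) => //= j; rewrite pcompE. Qed.

Lemma pid_comp (a : pmap n) : pcomp (pid n) a = a.
Proof. by apply/ffunP => i; rewrite pcompE /pid ffunE. Qed.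

Lemma pcomp_id (a : pmap n) : pcomp a (pid n) = a.
Proof. by apply/ffunP => i; rewrite pcompE; case: (a i) => //= j; rewrite /pid ffunE. Qed.

Lemma E_cons a w : E (a :: w) = pcomp (gen a) (E w).
Proof. by []. Qed.

Lemma E_cat u v : E (u ++ v) = pcomp (E u) (E v).
Proof.
elim: u => [|a u IH]; first by rewrite /= pid_comp.
by rewrite cat_cons !E_cons IH pcompA.
Qed.

Lemma inord_eq (i : 'I_n) a : a < n -> (i == inord a) = (nat_of_ord i == a).
Proof. by move=> ha; rewrite -(inj_eq val_inj) /= inordK. Qed.

Lemma E_ew s w i : all (fun k => k < n) s ->
  E (ew s ++ w) i = if nat_of_ord i \in s then None else E w i.
Proof.
elim: s => [|a s IH]; first by [].
move=> /andP[ha hs]; rewrite ew_cons cat_cons E_cons pcompE /= /pe ffunE inord_eq // in_cons.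
by case: eqP => //= _; rewrite IH.
Qed.

Lemma E_X k i : E (nseq k X) i = if nat_of_ord i + k < n then Some (inord (nat_of_ord i + k)) else None.
Proof.
elim: k i => [|k IH] i.
  by rewrite addn0 ltn_ord /= /pid ffunE inord_val.
rewrite -[nseq k.+1 X]/(X :: nseq k X) E_cons pcompE /= /px ffunE.
case: ifP => h /=.
  by rewrite IH /= modn_small // addSnnS.
by case: ifP => //; lia.
Qed.

Lemma E_Y k i : E (nseq k Y) i = if k <= nat_of_ord i then Some (inord (nat_of_ord i - k)) else None.
Proof.
elim: k i => [|k IH] i.
  by rewrite subn0 /= /pid ffunE inord_val.
rewrite -[nseq k.+1 Y]/(Y :: nseq k Y) E_cons pcompE /= /py ffunE.
case: ifP => h /=.
  rewrite IH /=.
  have -> : (i + n).-1 %% n = (nat_of_ord i).-1.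
    have -> : (i + n).-1 = (nat_of_ord i).-1 + n by lia.
    by rewrite modnDr modn_small //; have := ltn_ord i; lia.
  by case: ifP; case: ifP => //; try lia; move=> *; congr (Some (inord _)); lia.
by case: ifP => //; lia.
Qed.

Definition XY (b : bool) := if b then X else Y.

Lemma E_stdX s k i : all (fun k => k < n) s ->
  E (ew s ++ nseq k X) i =
  if (nat_of_ord i \notin s) && (nat_of_ord i + k < n) then Some (inord (nat_of_ord i + k)) else None.
Proof. by move=> hs; rewrite E_ew // E_X; case: (nat_of_ord i \in s). Qed.

Lemma E_stdY s k i : all (fun k => k < n) s ->
  E (ew s ++ nseq k Y) i =
  if (nat_of_ord i \notin s) && (k <= nat_of_ord i) then Some (inord (nat_of_ord i - k)) else None.
Proof. by move=> hs; rewrite E_ew // E_Y; case: (nat_of_ord i \in s). Qed.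


Lemma inordI a b : (inord a : 'I_n) = inord b -> a < n -> b < n -> a = b.
Proof. by move=> /(congr1 val) h ha hb; move: h; rewrite /= !inordK. Qed.

Lemma BXX s t k l : all (fun k => k < n) s -> all (fun k => k < n) t ->
  (forall i, E (ew s ++ nseq k X) i = E (ew t ++ nseq l X) i) ->
  c (ew s ++ nseq k X) (ew t ++ nseq l X).
Proof.
move=> hs ht H.
case: (pickP (fun i : 'I_n => (nat_of_ord i \notin s) && (i + k < n))) => [i hi|hno].
  have := H i; rewrite !E_stdX // hi; case: ifP => // /andP[_ hi2] [] /inordI.
  move: hi => /andP[_ hi1] /(_ hi1 hi2) /addnI hkl; subst l.
  have := CX k [::] hs; have := CX k [::] ht; rewrite !cats0 => -> ->.
  apply: cat_mor => //; apply: eperm.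
  - by apply/allP => x; rewrite mem_filter => /andP[_]; apply: (allP hs).
  - by apply/allP => x; rewrite mem_filter => /andP[_]; apply: (allP ht).
  move=> x; rewrite !mem_filter; case: (ltnP (x + k) n) => hx; rewrite ?andbF ?andbT //.
  have hxn : x < n by lia.
  have := H (inord x); rewrite !E_stdX // inordK // hx !andbT.
  by case: (x \in s); case: (x \in t).
transitivity (ew Zs).
  apply: EmptyX => // j hj; have := hno (inord j); rewrite /= inordK ?hj ?andbT; last by lia.
  by move/negbT; rewrite negbK.
symmetry; apply: EmptyX => // j hj; have hjn : j < n by lia.
have := H (inord j); rewrite !E_stdX // inordK // hj andbT.
have := hno (inord j); rewrite /= inordK // => ->.
by case: (j \in t).
Qed.

Lemma BYY s t k l : all (fun k => k < n) s -> all (fun k => k < n) t ->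
  (forall i, E (ew s ++ nseq k Y) i = E (ew t ++ nseq l Y) i) ->
  c (ew s ++ nseq k Y) (ew t ++ nseq l Y).
Proof.
move=> hs ht H.
case: (pickP (fun i : 'I_n => (nat_of_ord i \notin s) && (k <= i))) => [i hi|hno].
  have := H i; rewrite !E_stdY // hi; case: ifP => // /andP[_ hi2] [] /inordI.
  have hin := ltn_ord i.
  move: hi => /andP[_ hi1] => hh.
  have hh2 : i - k = i - l by apply: hh; lia.
  have hkl : l = k by lia.
  subst l.
  have := CY k [::] hs; have := CY k [::] ht; rewrite !cats0 => -> ->.
  apply: cat_mor => //; apply: eperm.
  - by apply/allP => x; rewrite mem_filter => /andP[_]; apply: (allP hs).
  - by apply/allP => x; rewrite mem_filter => /andP[_]; apply: (allP ht).
  move=> x; rewrite !mem_filter; case: (leqP k x) => hx //=.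
  case: (ltnP x n) => hxn; last first.
    case xs: (x \in s); first by have := allP hs x xs; lia.
    case xt: (x \in t); first by have := allP ht x xt; lia.
    by [].
  have := H (inord x); rewrite !E_stdY // inordK // hx !andbT.
  by case: (x \in s); case: (x \in t).
transitivity (ew Zs).
  apply: EmptyY => // j hj hjn; have := hno (inord j); rewrite /= inordK // hj andbT.
  by move/negbT; rewrite negbK.
symmetry; apply: EmptyY => // j hj hjn.
have := H (inord j); rewrite !E_stdY // inordK // hj andbT.
have := hno (inord j); rewrite /= inordK // => ->.
by case: (j \in t).
Qed.

Lemma BXY s t k l : all (fun k => k < n) s -> all (fun k => k < n) t ->
  (forall i, E (ew s ++ nseq k X) i = E (ew t ++ nseq l Y) i) ->
  c (ew s ++ nseq k X) (ew t ++ nseq l Y).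
Proof.
move=> hs ht H.
case: k H => [|k] H.
  by rewrite -[nseq 0 X]/(nseq 0 Y); apply: BYY.
case: l H => [|l] H.
  by rewrite -[nseq 0 Y]/(nseq 0 X); apply: BXX.
transitivity (ew Zs).
  apply: EmptyX => // j hj; have hjn : j < n by lia.
  case js: (j \in s) => //.
  have := H (inord j); rewrite E_stdX // E_stdY // inordK // js hj /=.
  case: ifP => // /andP[_ hl] [] /inordI h.
  have : j + k.+1 = j - l.+1 by apply: h; lia.
  lia.
symmetry; apply: EmptyY => // j hj hjn.
case jt: (j \in t) => //.
have := H (inord j); rewrite E_stdX // E_stdY // inordK // jt hj /=.
case: ifP => // /andP[_ hl] [] /inordI h.
have : j + k.+1 = j - l.+1 by apply: h; lia.
lia.
Qed.


Definition stdw (w : seq (letter n)) :=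
  exists s k (b : bool), all (fun k => k < n) s /\ w = ew s ++ nseq k (XY b).

Lemma Bstd w1 w2 : stdw w1 -> stdw w2 -> E w1 = E w2 -> c w1 w2.
Proof.
move=> [s [k [b [hs ->]]]] [t [l [b' [ht ->]]]] /ffunP H.
case: b b' H => [] [] H /=.
- exact: BXX.
- exact: BXY.
- by symmetry; apply: BXY => // i; rewrite H.
- exact: BYY.
Qed.

Lemma ew_rcons s a w : ew s ++ eL a :: w = ew (s ++ [:: a]) ++ w.
Proof. by rewrite ew_cat -catA. Qed.

Lemma toStd w : exists2 w', stdw w' & c w w'.
Proof.
elim: w => [|a w [w' [s [k [b [hs ->]]]] hc]].
  by exists [::] => //; exists [::], 0, true.
case: a => [||i].
- case: b hc => hc.
    exists (ew (shd s) ++ nseq k.+1 X); first by exists (shd s), k.+1, true; split; rewrite // (all_shd hs).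
    by rewrite hc; apply: pushX.
  case: k hc => [|k] hc.
    exists (ew (shd s) ++ nseq 1 X); first by exists (shd s), 1, true; split; rewrite // (all_shd hs).
    by rewrite hc; apply: pushX.
  exists (ew (shd s ++ [:: m.+1]) ++ nseq k Y).
    by exists (shd s ++ [:: m.+1]), k, false; split; rewrite // all_cat (all_shd hs) /= ltnSn.
  by rewrite hc /= pushX // xy_n ew_rcons.
- case: b hc => hc; last first.
    exists (ew (sup s) ++ nseq k.+1 Y); first by exists (sup s), k.+1, false; split; rewrite // all_sup.
    by rewrite hc; apply: pushY.
  case: k hc => [|k] hc.
    exists (ew (sup s) ++ nseq 1 Y); first by exists (sup s), 1, false; split; rewrite // all_sup.
    by rewrite hc; apply: pushY.
  exists (ew (sup s ++ [:: 0]) ++ nseq k X).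
    by exists (sup s ++ [:: 0]), k, true; split; rewrite // all_cat all_sup.
  by rewrite hc /= pushY // yx_n ew_rcons.
- exists (ew (nat_of_ord i :: s) ++ nseq k (XY b)).
    by exists (nat_of_ord i :: s), k, b; split; rewrite //= ltn_ord hs.
  by rewrite hc ew_cons inord_val.
Qed.


Lemma E1 a : E [:: a] = gen a.
Proof. by rewrite E_cons /= pcomp_id. Qed.

Lemma E2 a b j : E [:: a; b] j = obind (gen b) (gen a j).
Proof. by rewrite E_cons pcompE E1. Qed.

Lemma peE (i j : 'I_n) : pe i j = if j == i then None else Some j.
Proof. by rewrite /pe ffunE. Qed.
Lemma pxE (j : 'I_n) : px n j = if j.+1 < n then Some (ordS j) else None.
Proof. by rewrite /px ffunE. Qed.
Lemma pyE (j : 'I_n) : py n j = if 0 < j then Some (ord_pred j) else None.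
Proof. by rewrite /py ffunE. Qed.

Lemma ordS_val (j : 'I_n) : j.+1 < n -> nat_of_ord (ordS j) = j.+1.
Proof. by move=> h; rewrite /= modn_small. Qed.

Lemma ord_pred_val (j : 'I_n) : 0 < j -> nat_of_ord (ord_pred j) = j.-1.
Proof.
move=> h; rewrite /=.
have -> : (j + n).-1 = j.-1 + n by lia.
by rewrite modnDr modn_small //; have := ltn_ord j; lia.
Qed.

Lemma sem_rel u v : (u, v) \in rels n -> E u = E v.
Proof.
move=> H; apply/ffunP; suff: forall j : 'I_n, E u j = E v j by [].
move=> j; case/inCat: H => [H|/inCat [H|/inCat [H|/inCat [H|/inCat [H|H]]]]].
- case/mapP: H => i _ [-> ->].
  rewrite E2 E1 /= !peE; case: ifP => //= h; by rewrite peE h.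
- case/inCat: H => /mapP [i]; rewrite mem_filter => /andP[/eqP hi _] [-> ->].
    rewrite E2 E1 /= pxE peE.
    have ji : (j == i) = ~~ (j.+1 < n) by rewrite -(inj_eq val_inj) /= hi; have := ltn_ord j; case: eqP; lia.
    rewrite ji; case: ifP => h //=.
    by rewrite pyE ordS_val // ordSK.
  rewrite E2 E1 /= pyE peE.
  have ji : (j == i) = ~~ (0 < j) by rewrite -(inj_eq val_inj) /= hi; case: eqP; lia.
  rewrite ji; case: ifP => h //=.
  by rewrite pxE ord_predK ord_pred_val // prednK // ltn_ord.
- case/inCat: H => /mapP [i]; rewrite mem_filter => /andP[/eqP hi _] [-> ->].
    rewrite E2 E1 /= pxE; case: ifP => h //=.
    by rewrite peE -(inj_eq val_inj) /= modn_small // hi.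
  rewrite E2 E1 /= peE pyE; case: eqP => [->|hj] /=; first by rewrite hi.
  by rewrite pyE.
- case/allpairsPdep: H => [i [k [_ hk [-> ->]]]].
  rewrite !E2 /= !peE.
  by case: ifP => hji; case: ifP => hjk //=; rewrite !peE ?hji ?hjk.
- case/allpairsPdep: H => [i [k [_ hk [-> ->]]]].
  move: hk; rewrite mem_filter => /andP[/eqP hk _].
  rewrite !E2 /= pxE peE.
  case: ifP => h /=.
    rewrite peE -(inj_eq val_inj) /= modn_small // hk eqSS (inj_eq val_inj).
    by case: eqP => //= _; rewrite pxE h.
  case: eqP => //= _; by rewrite pxE h.
- case/mapP: H => i; rewrite mem_filter => /andP[/eqP hi _] [-> ->].
  rewrite es_tail_ew -[ew Ts]cats0 (E_cons X) (E_cons (LE i)) !pcompE.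
  rewrite -[gen X]/(px n) -[gen (LE i)]/(pe i) pxE peE.
  have obS (f : 'I_n -> option 'I_n) x : obind f (Some x) = f x by [].
  have obN (f : 'I_n -> option 'I_n) : obind f None = None by [].
  case: ifP => h; rewrite ?obS ?obN.
    rewrite E_ew ?all_Ts // ordS_val // mem_filter mem_iota h.
    case: ifP => ji; rewrite ?obS ?obN //.
    rewrite E_ew ?all_Ts // mem_filter mem_iota ltn_ord /=.
    case: ltnP => // j0; move/eqP: ji; case; apply: val_inj; rewrite /= hi; lia.
  case: ifP => ji; rewrite ?obS ?obN //.
  rewrite E_ew ?all_Ts // mem_filter mem_iota ltn_ord /=.
  case: ltnP => // j0; move/eqP: ji; case; apply: val_inj; rewrite /= hi; lia.
Qed.

Lemma sound u v : c u v -> E u = E v.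
Proof.
elim=> {u v} [u v|u|u v _ ->|u v w _ -> _ ->|u v u' v' _ e1 _ e2] //.
  exact: sem_rel.
by rewrite !E_cat e1 e2.
Qed.

Lemma complete u v : E u = E v -> c u v.
Proof.
move=> huv.
have [u' su cu] := toStd u; have [v' sv cv] := toStd v.
rewrite cu cv; apply: Bstd => //.
by rewrite -(sound cu) -(sound cv).
Qed.


Lemma iter_val k (i : 'I_n) : nat_of_ord (iter k (@gcyc n) i) = (i + k) %% n.
Proof.
elim: k => [|k IH]; first by rewrite addn0 modn_small.
rewrite /= /gcyc /= IH -addn1 modnDml addn1 addnS.
by [].
Qed.

Lemma obS (f : 'I_n -> option 'I_n) x : obind f (Some x) = f x.
Proof. by []. Qed.

Lemma gen_all a : in_OCI a -> exists w, E w = a.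
Proof.
move=> [[_ [s [[k hk hs] hsa]]] op].
have sval i : nat_of_ord (s i) = (i + k) %% n by rewrite hs iter_val.
set cl := [seq nat_of_ord j | j <- enum 'I_n & ~~ in_dom a j].
have acl : all (fun k => k < n) cl.
  by apply/allP => x /mapP [j _ ->].
have memcl i : (nat_of_ord i \in cl) = ~~ in_dom a i.
  apply/mapP/idP => [[j]|h].
    by rewrite mem_filter => /andP[hj _] /val_inj ->.
  by exists i; rewrite // mem_filter h mem_enum.
have ndom i : ~~ in_dom a i -> a i = None by rewrite /in_dom negbK => /eqP.
case: (pickP (fun i : 'I_n => in_dom a i && (n <= i + k))) => [i0 /andP[d0 h0]|hno].
  exists (ew cl ++ nseq (n - k) Y); apply/ffunP => i; rewrite E_stdY // memcl negbK.
  case: (boolP (in_dom a i)) => di /=; last by rewrite ndom.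
  have hik : n <= i + k.
    rewrite leqNgt; apply/negP => hik.
    have hi0 := ltn_ord i0.
    have := op i i0 (s i) (s i0) (hsa i di) (hsa i0 d0).
    rewrite !sval modn_small // -[i0 + k](subnK h0) modnDr modn_small; last by lia.
    have hii0 : i <= i0 by lia.
    by move/(_ hii0); lia.
  have -> : n - k <= i by lia.
  rewrite hsa //; congr Some; apply: val_inj; rewrite /= inordK ?sval; last by have := ltn_ord i; lia.
  by rewrite -[i + k](subnK hik) modnDr modn_small; have := ltn_ord i; lia.
exists (ew cl ++ nseq k X); apply/ffunP => i; rewrite E_stdX // memcl negbK.
case: (boolP (in_dom a i)) => di /=; last by rewrite ndom.
have := hno i; rewrite /= di /= => /negbT; rewrite -ltnNge => hik.
by rewrite hik hsa //; congr Some; apply: val_inj; rewrite /= inordK // sval modn_small.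
Qed.

Lemma gen_in c0 : in_OCI (@gen n c0).
Proof.
case: c0 => [||i] /=.
- split; first split.
  + apply/forallP => i; apply/forallP => j; apply/implyP => /andP[].
    rewrite /in_dom !pxE; case: ifP => // hi _; case: ifP => // hj /eqP [] e.
    by move: e; rewrite !modn_small // => -[e]; apply/eqP/val_inj.
  + exists (@gcyc n); split; first by exists 1.
    by move=> i; rewrite /in_dom pxE; case: ifP.
  + move=> i j ai aj; rewrite !pxE; case: ifP => // hi [<-]; case: ifP => // hj [<-].
    by rewrite !ordS_val.
- split; first split.
  + apply/forallP => i; apply/forallP => j; apply/implyP => /andP[].
    rewrite /in_dom !pyE; case: ifP => // hi _; case: ifP => // hj /eqP e.
    have e' := congr1 (fun o => if o is Some x then x else i) e; move: e' => /= e'.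
    by apply/eqP; exact: (can_inj (@ord_predK n) e').
  + exists (iter m.+1 (@gcyc n)); split; first by exists m.+1.
    move=> i; rewrite /in_dom pyE; case: ifP => // hi _; congr Some; apply: val_inj.
    change (nat_of_ord (ord_pred i) = nat_of_ord (iter m.+1 (@gcyc n) i)).
    rewrite iter_val /=; congr (_ %% _); lia.
  + move=> i j ai aj; rewrite !pyE; case: ifP => // hi [<-]; case: ifP => // hj [<-].
    by rewrite !ord_pred_val //; lia.
- split; first split.
  + apply/forallP => x; apply/forallP => y; apply/implyP => /andP[].
    by rewrite /in_dom !peE; case: ifP => // hx _; case: ifP => // hy /eqP [] ->.
  + exists id; split; first by exists 0.
    by move=> x; rewrite /in_dom peE; case: ifP.
  + by move=> x y ax ay; rewrite !peE; case: ifP => // _ [<-]; case: ifP => // _ [<-].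
Qed.

Lemma gen_inj : injective (@gen n).
Proof.
case=> [||i] [||j] //= /ffunP.
- move/(_ ord0); rewrite pxE pyE //.
- move/(_ ord0); rewrite pxE peE; case: ifP => //= _.
- move/(_ ord0); rewrite pxE pyE //.
- move/(_ ord_max); rewrite pyE peE; case: ifP => // _ /(congr1 (omap val)).
  by rewrite [omap _ _]/= modnDr modn_small // => -[]; lia.
- move/(_ ord0); rewrite pxE peE; case: ifP => //= _.
- move/(_ ord_max); rewrite pyE peE; case: ifP => // _ /(congr1 (omap val)).
  by rewrite [omap _ (Some (ord_pred _))]/= modnDr modn_small // => -[]; lia.
- move/(_ i); rewrite !peE eqxx; case: ifP => [/eqP -> //|//].
Qed.



End Main.

Lemma cnt_enum N (P : pred nat) :
  count (fun i : 'I_N => P (nat_of_ord i)) (enum 'I_N) = count P (iota 0 N).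
Proof. by rewrite -val_enum_ord count_map. Qed.

Lemma iotaS0 N : iota 0 N.+1 = iota 0 N ++ [:: N].
Proof. by rewrite -addn1 iotaD. Qed.

Lemma cnt_gt a N : count (fun x => a < x) (iota 0 N) = N - a.+1.
Proof. elim: N => [|N IH] //; rewrite iotaS0 count_cat IH /=; case: ltnP => h /=; lia. Qed.

Lemma cnt_eq a N : count (fun x => x == a) (iota 0 N) = (a < N).
Proof. elim: N => [|N IH] //; rewrite iotaS0 count_cat IH /=; case: eqP => h /=; subst; case: ltngtP; lia. Qed.

Lemma sum_tri N : sumn [seq N - i.+1 | i <- iota 0 N] = 'C(N, 2).
Proof.
elim: N => [|N IH] //.
rewrite -[iota 0 N.+1]/(0 :: iota 1 N) /= -[1]/(1 + 0) iotaDl -map_comp.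
rewrite binS bin1 -IH addnC; congr (_ + _); last by lia.
Qed.

Lemma cnt_lt b M : count (fun x => x < b) (iota 0 M) = minn b M.
Proof. elim: M => [|M IH]; first by rewrite minn0. rewrite iotaS0 count_cat IH /=; case: ltnP => h /=; lia. Qed.

Lemma size_rels m : size (rels m.+2) = (m.+2 ^ 2 + 3 * m.+2 + 8)./2.
Proof.
have s1 : size (U1 m.+2) = m.+2 by rewrite /U1 size_map size_enum_ord.
have s2 : size (U2 m.+2) = 2.
  rewrite /U2 size_cat !size_map !size_filter.
  rewrite (@cnt_enum _ (fun k => k == m.+1)) (@cnt_enum _ (fun k => k == 0)) !cnt_eq.
  by rewrite ltnSn.
have s3 : size (U3 m.+2) = 2.
  rewrite /U3 size_cat !size_map !size_filter.
  by rewrite (@cnt_enum _ (fun k => k == 0)) !cnt_eq.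
have s4 : size (U4 m.+2) = 'C(m.+2, 2).
  rewrite /U4 size_allpairs_dep.
  have -> : [seq size [seq j : 'I_m.+2 <- enum 'I_m.+2 | i < j] | i : 'I_m.+2 <- enum 'I_m.+2] =
            [seq m.+2 - (nat_of_ord i).+1 | i <- enum 'I_m.+2].
    by apply: eq_map => i; rewrite size_filter (@cnt_enum _ (fun k => i < k)) cnt_gt.
  by rewrite -sum_tri -val_enum_ord -map_comp.
have s5 : size (U5 m.+2) = m.+1.
  rewrite /U5 size_allpairs_dep.
  have -> : [seq size [seq j : 'I_m.+2 <- enum 'I_m.+2 | val j == (val i).+1] | i : 'I_m.+2 <- enum 'I_m.+2] =
            [seq nat_of_bool ((nat_of_ord i) < m.+1) | i <- enum 'I_m.+2].
    apply: eq_map => i; rewrite size_filter (@cnt_enum _ (fun k => k == (nat_of_ord i).+1)) cnt_eq.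
    by [].
  rewrite sumn_count (@cnt_enum _ (fun k => k < m.+1)) cnt_lt.
  by rewrite /minn ltnSn.
have s6 : size (U6 m.+2) = 1.
  by rewrite /U6 size_map size_filter (@cnt_enum _ (fun k => k == 0)) cnt_eq.
rewrite /rels size_cat s1 size_cat s2 size_cat s3 size_cat s4 size_cat s5 s6 bin2 -!divn2 /=.
lia.
Qed.

Lemma card_letter N : #|{: letter N}| = N + 2.
Proof.
have bij : bijective (@letter_enc N).
  by exists (@letter_dec N); [exact: letter_encK | case => [[i|]|]].
by rewrite (bij_eq_card bij) !card_option card_ord addn2.
Qed.

Theorem theorem2p16 (n : nat) (hn : 2 <= n) :
  [/\ is_presentation (@in_OCI n) (@gen n) (rels n),
      #|{: letter n}| = n + 2 &
      size (rels n) = (n ^ 2 + 3 * n + 8)./2].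
Proof.
case: n hn => [|[|m]] // _.
split; [|exact: card_letter|exact: size_rels].
split.
- exact: gen_in.
- exact: gen_inj.
- by move=> a /gen_all.
- by move=> u v; split; [exact: complete | exact: sound].
Qed.
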